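(* Let $N\trianglelefteq G\trianglelefteq H$ be finite groups with $N\trianglelefteq H$, let $b$ be an $H$-stable block of $kG$ covering a block $c$ of $kN$, let $I_H(c)=\{h\in H\mid{}^hc=c\}$, $I_G(c)=I_H(c)\cap G$, and let $\tilde b$ be the Fong correspondent of $b$ in $I_G(c)$. Then there exist a $p$-subgroup $P$ of $I_H(c)$ and a primitive idempotent $i$ of $(kI_G(c)\tilde b)^P$ such that: $P$ is maximal among $p$-subgroups $Q$ of $H$ with $\mathrm{Br}^G_Q(b)\ne0$; $P$ is maximal among $p$-subgroups $Q$ of $I_H(c)$ with $\mathrm{Br}^{I_G(c)}_Q(\tilde b)\neq0$; $i$ is a primitive idempotent of $(kGb)^P$; and $\mathrm{Br}^G_P(i)\ne0$. Thus $i$ is a source idempotent both of the $I_H(c)$-algebra $kI_G(c)\tilde b$ and of the $H$-algebra $kGb$.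
   Context: $k$ is an algebraically closed field of characteristic $p$; blocks are primitive idempotents of $Z(kG)$; $\mathrm{Br}^G_Q:(kG)^Q\to kC_G(Q)$ sends $\sum\alpha_gg$ to $\sum_{g\in C_G(Q)}\alpha_gg$. A block $b$ of $kG$ covers a block $c$ of $kN$ ($N\trianglelefteq G$) if $bc\ne 0$. The Fong correspondent of $b$ is the unique block $\tilde b$ of $kI_G(c)$ covering $c$ with $b=\mathrm{Tr}^G_{I_G(c)}(\tilde b)=\sum_{x\in[G/I_G(c)]}{}^x\tilde b$. A source idempotent of the $H$-algebra $kGb$ is a primitive idempotent $i\in(kGb)^P$ with $\mathrm{Br}^G_P(i)\ne0$, where $P\le H$ is a $p$-subgroup maximal with $\mathrm{Br}^G_P(b)\ne0$. *)

(* Defs.v *)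
From HB Require Import structures.
From mathcomp Require Import all_boot all_order all_algebra all_fingroup all_solvable.
From mathcomp Require Import pgroup.
Set Implicit Arguments. Unset Strict Implicit. Unset Printing Implicit Defensive.
Import GRing.Theory.
Local Open Scope ring_scope.

(* Group algebras are modelled inside the group algebra k[gT] of the ambient
   finite group type gT: an element is a function gT -> k (its coefficients).
   kA (A a subset of gT) = elements supported in A. *)
Section GroupAlgebra.
Variables (F : fieldType) (gT : finGroupType).

Definition galg := {ffun gT -> F}.

Definition gmul (a b : galg) : galg :=
  [ffun x => \sum_(y : gT) a y * b ((y^-1 * x)%g)].

Definition gsupp (A : {set gT}) (a : galg) : Prop :=
  forall x, x \notin A -> a x = 0.

(* ^h a = h a h^-1 ; coefficient of x is a(h^-1 x h) = a (x ^ h) *)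
Definition gconj (h : gT) (a : galg) : galg := [ffun x => a (x ^ h)%g].

Definition gfixed (Q : {set gT}) (a : galg) : Prop :=
  forall q, q \in Q -> gconj q a = a.

(* Brauer morphism Br_Q : keeps the coefficients on C(Q); on (kG)^Q this is
   sum_{g in C_G(Q)} a_g g. *)
Definition gBr (Q : {set gT}) (a : galg) : galg :=
  [ffun x => if x \in ('C(Q))%g then a x else 0].

Definition gcenter (A : {set gT}) (a : galg) : Prop :=
  gsupp A a /\ forall c, gsupp A c -> gmul a c = gmul c a.

Definition prim_idem (Alg : galg -> Prop) (e : galg) : Prop :=
  [/\ Alg e, gmul e e = e, e != 0 &
      forall f, Alg f -> gmul f f = f -> gmul f e = f -> gmul e f = f ->
        f = 0 \/ f = e].

Definition gblock (A : {set gT}) (b : galg) : Prop := prim_idem (gcenter A) b.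

Definition covers (b c : galg) : Prop := gmul b c != 0.

Definition inertia (H : {set gT}) (c : galg) : {set gT} :=
  [set h in H | gconj h c == c].

Definition gTr (G K : {set gT}) (a : galg) : galg :=
  \sum_(X in lcosets K G) gconj (repr X) a.

Definition fixalg (A : {set gT}) (e : galg) (Q : {set gT}) (a : galg) : Prop :=
  [/\ gsupp A a, gmul a e = a & gfixed Q a].

Definition maxBr (p : nat) (H : {set gT}) (b : galg) (P : {group gT}) : Prop :=
  [/\ (p.-group P)%g, P \subset H, gBr P b != 0 &
      forall Q : {group gT}, (p.-group Q)%g -> Q \subset H -> gBr Q b != 0 ->
        P \subset Q -> Q :=: P].

End GroupAlgebra.

(* Main.v *)
Require Import Defs.
From HB Require Import structures.
From mathcomp Require Import all_boot all_order all_algebra all_fingroup all_solvable.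
From mathcomp Require Import pgroup.
From Stdlib Require Import Classical.
Set Implicit Arguments. Unset Strict Implicit. Unset Printing Implicit Defensive.
Import GRing.Theory.
Local Open Scope ring_scope.

Section Basic.
Variables (F : fieldType) (gT : finGroupType).
Local Notation galg := (galg F gT).
Implicit Types (a b e f : galg) (A : {group gT}) (g h x y : gT).

Lemma gmulE a b x : gmul a b x = \sum_(y : gT) a y * b ((y^-1 * x)%g).
Proof. by rewrite ffunE. Qed.

Lemma gmulA a b e : gmul (gmul a b) e = gmul a (gmul b e).
Proof.
apply/ffunP=> x; rewrite !gmulE.
under eq_bigr do rewrite gmulE mulr_suml.
rewrite exchange_big /=; apply: eq_bigr => y _.
rewrite gmulE mulr_sumr (reindex_inj (mulgI y)) /=.
apply: eq_bigr => z _; by rewrite mulKg invMg -!mulgA mulrA.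
Qed.

Lemma gmulDl a b e : gmul (a + b) e = gmul a e + gmul b e.
Proof.
by apply/ffunP=> x; rewrite !ffunE -big_split; apply: eq_bigr => y _; rewrite ffunE mulrDl.
Qed.

Lemma gmulDr a b e : gmul e (a + b) = gmul e a + gmul e b.
Proof.
by apply/ffunP=> x; rewrite !ffunE -big_split; apply: eq_bigr => y _; rewrite ffunE mulrDr.
Qed.

Lemma gmulNl a e : gmul (- a) e = - gmul a e.
Proof.
by apply/ffunP=> x; rewrite !ffunE -sumrN; apply: eq_bigr => y _; rewrite ffunE mulNr.
Qed.

Lemma gmulNr a e : gmul e (- a) = - gmul e a.
Proof.
by apply/ffunP=> x; rewrite !ffunE -sumrN; apply: eq_bigr => y _; rewrite ffunE mulrN.
Qed.

Lemma gmulBl a b e : gmul (a - b) e = gmul a e - gmul b e.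
Proof. by rewrite gmulDl gmulNl. Qed.

Lemma gmulBr a b e : gmul e (a - b) = gmul e a - gmul e b.
Proof. by rewrite gmulDr gmulNr. Qed.

Lemma gmul0l e : gmul 0 e = 0.
Proof. by apply/ffunP=> x; rewrite !ffunE big1 // => y _; rewrite ffunE mul0r. Qed.

Lemma gmul0r e : gmul e 0 = 0.
Proof. by apply/ffunP=> x; rewrite !ffunE big1 // => y _; rewrite ffunE mulr0. Qed.

Lemma gmul_suml (I : finType) (P : pred I) (g : I -> galg) e :
  gmul (\sum_(i | P i) g i) e = \sum_(i | P i) gmul (g i) e.
Proof.
apply: (big_ind2 (fun u v => gmul u e = v)); first exact: gmul0l.
  by move=> u1 v1 u2 v2 <- <-; rewrite gmulDl.
by [].
Qed.

Lemma gmul_sumr (I : finType) (P : pred I) (g : I -> galg) e :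
  gmul e (\sum_(i | P i) g i) = \sum_(i | P i) gmul e (g i).
Proof.
apply: (big_ind2 (fun u v => gmul e u = v)); first exact: gmul0r.
  by move=> u1 v1 u2 v2 <- <-; rewrite gmulDr.
by [].
Qed.

Lemma gconjE h a x : gconj h a x = a (x ^ h)%g.
Proof. by rewrite ffunE. Qed.

Lemma gconjM h a b : gconj h (gmul a b) = gmul (gconj h a) (gconj h b).
Proof.
apply/ffunP=> x; rewrite !ffunE (reindex_inj (@conjg_inj _ h)) /=.
apply: eq_bigr => y _; rewrite !ffunE; congr (_ * _); congr (b _).
by rewrite conjMg conjVg.
Qed.

Lemma gconjD h a b : gconj h (a + b) = gconj h a + gconj h b.
Proof. by apply/ffunP=> x; rewrite !ffunE. Qed.

Lemma gconjN h a : gconj h (- a) = - gconj h a.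
Proof. by apply/ffunP=> x; rewrite !ffunE. Qed.

Lemma gconjB h a b : gconj h (a - b) = gconj h a - gconj h b.
Proof. by rewrite gconjD gconjN. Qed.

Lemma gconj0 h : gconj h (0 : galg) = 0.
Proof. by apply/ffunP=> x; rewrite !ffunE. Qed.

Lemma gconj_sum h (I : finType) (P : pred I) (g : I -> galg) :
  gconj h (\sum_(i | P i) g i) = \sum_(i | P i) gconj h (g i).
Proof.
apply: (big_ind2 (fun u v => gconj h u = v)); first exact: gconj0.
  by move=> u1 v1 u2 v2 <- <-; rewrite gconjD.
by [].
Qed.

Lemma gconj1 a : gconj 1%g a = a.
Proof. by apply/ffunP=> x; rewrite !ffunE conjg1. Qed.

Lemma gconjJ g h a : gconj g (gconj h a) = gconj (g * h)%g a.
Proof. by apply/ffunP=> x; rewrite !ffunE conjgM. Qed.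

Lemma gconjK h a : gconj h^-1 (gconj h a) = a.
Proof. by rewrite gconjJ mulVg gconj1. Qed.

Lemma gconjVK h a : gconj h (gconj h^-1 a) = a.
Proof. by rewrite gconjJ mulgV gconj1. Qed.

Lemma gconj_inj h : injective (@gconj F gT h).
Proof. by move=> a b /(congr1 (gconj h^-1)); rewrite !gconjK. Qed.

Lemma gconj_eq0 h a : (gconj h a == 0) = (a == 0).
Proof.
apply/eqP/eqP => [|->]; last exact: gconj0.
by move=> /(congr1 (gconj h^-1)); rewrite gconjK gconj0.
Qed.

Lemma ffun0E x : (0 : galg) x = 0.
Proof. by rewrite ffunE. Qed.

Definition gdelta g : galg := [ffun x => (x == g)%:R].
Definition gsc (k : F) a : galg := [ffun x => k * a x].

Lemma sum_delta (f0 : gT -> F) z : \sum_(y : gT) f0 y * (y == z)%:R = f0 z.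
Proof.
rewrite (bigD1 z) //= eqxx mulr1 big1 ?addr0 // => y /negbTE ->.
by rewrite mulr0.
Qed.

Lemma sum_delta_l (f0 : gT -> F) z : \sum_(y : gT) (y == z)%:R * f0 y = f0 z.
Proof. by rewrite -[RHS]sum_delta; apply: eq_bigr => y _; rewrite mulrC. Qed.

Lemma gmul_delta_r e h x : gmul e (gdelta h) x = e (x * h^-1)%g.
Proof.
rewrite gmulE -[RHS](sum_delta e); apply: eq_bigr => y _; rewrite ffunE.
rewrite (_ : (y^-1 * x == h)%g = (y == x * h^-1)%g) //.
apply/eqP/eqP => [<-|->]; first by rewrite invMg invgK mulgA mulgV mul1g.
by rewrite invMg invgK -mulgA mulVg mulg1.
Qed.

Lemma gmul_delta_l e h x : gmul (gdelta h) e x = e (h^-1 * x)%g.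
Proof.
rewrite gmulE -[RHS](sum_delta_l (fun y => e (y^-1 * x)%g)).
by apply: eq_bigr => y _; rewrite ffunE.
Qed.

Lemma delta_comm g a : gmul (gdelta g) a = gmul (gconj g a) (gdelta g).
Proof.
apply/ffunP=> x; rewrite gmul_delta_l gmul_delta_r gconjE; congr (a _).
by rewrite conjgE -!mulgA mulVg mulg1.
Qed.

Lemma gmul_scl k a b : gmul (gsc k a) b = gsc k (gmul a b).
Proof.
by apply/ffunP=> x; rewrite !ffunE mulr_sumr; apply: eq_bigr => y _; rewrite ffunE mulrA.
Qed.

Lemma gmul_scr k a b : gmul a (gsc k b) = gsc k (gmul a b).
Proof.
apply/ffunP=> x; rewrite !ffunE mulr_sumr; apply: eq_bigr => y _.
by rewrite ffunE mulrCA.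
Qed.

Lemma gsc0 a : gsc 0 a = 0.
Proof. by apply/ffunP=> x; rewrite !ffunE mul0r. Qed.

Lemma gdecomp a : a = \sum_(g : gT) gsc (a g) (gdelta g).
Proof.
apply/ffunP=> x; rewrite sum_ffunE -[LHS](sum_delta_l a).
by apply: eq_bigr => y _; rewrite !ffunE mulrC eq_sym.
Qed.

Lemma gsupp_mul A a b : gsupp A a -> gsupp A b -> gsupp A (gmul a b).
Proof.
move=> ha hb x xA; rewrite gmulE big1 // => y _.
case: (boolP (y \in A)) => yA; last by rewrite ha ?mul0r.
by rewrite hb ?mulr0 // groupMl ?groupV.
Qed.

Lemma gsupp_conj A h a : h \in ('N(A))%g -> gsupp A a -> gsupp A (gconj h a).
Proof. by move=> nA ha x xA; rewrite gconjE ha // memJ_norm. Qed.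

Lemma gsupp_add (A : {set gT}) a b : gsupp A a -> gsupp A b -> gsupp A (a + b).
Proof. by move=> ha hb x xA; rewrite ffunE ha ?hb ?addr0. Qed.

Lemma gsupp_opp (A : {set gT}) a : gsupp A a -> gsupp A (- a).
Proof. by move=> ha x xA; rewrite ffunE ha ?oppr0. Qed.

Lemma gsupp_sub (A : {set gT}) a b : gsupp A a -> gsupp A b -> gsupp A (a - b).
Proof. by move=> ha hb; apply: gsupp_add => //; apply: gsupp_opp. Qed.

Lemma gsupp0 (A : {set gT}) : gsupp A (0 : galg).
Proof. by move=> x _; rewrite ffunE. Qed.

Lemma gsupp_sum (A : {set gT}) (I : finType) (P : pred I) (g : I -> galg) :
  (forall i, P i -> gsupp A (g i)) -> gsupp A (\sum_(i | P i) g i).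
Proof.
move=> H; apply: (big_ind (gsupp A)); [exact: gsupp0 | exact: gsupp_add | exact: H].
Qed.

Lemma gsuppS (A B : {set gT}) a : A \subset B -> gsupp A a -> gsupp B a.
Proof.
move=> sAB ha x xB; apply: ha; apply: contra xB; exact: (subsetP sAB).
Qed.

Lemma gsupp_delta (A : {set gT}) g : g \in A -> gsupp A (gdelta g).
Proof.
move=> gA x xA; rewrite ffunE; case: eqP => // xg; by rewrite xg gA in xA.
Qed.

Lemma gsupp_sc (A : {set gT}) k a : gsupp A a -> gsupp A (gsc k a).
Proof. by move=> ha x xA; rewrite ffunE ha ?mulr0. Qed.

Lemma comm_fixed (K : {set gT}) c a :
  gsupp K a -> (forall j, j \in K -> gconj j c = c) -> gmul c a = gmul a c.
Proof.
move=> ha hc; apply/ffunP=> x; rewrite !gmulE.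
have inj : injective (fun z => x * z^-1)%g by move=> u v /mulgI /invg_inj.
rewrite (reindex_inj inj) /=; apply: eq_bigr => z _.
rewrite mulrC invMg invgK -mulgA mulVg mulg1.
case: (boolP (z \in K)) => zK; last by rewrite !ha ?mul0r.
congr (_ * _).
by rewrite -{1}(hc z zK) gconjE conjgE; congr (c _); rewrite -!mulgA mulVg mulg1.
Qed.

Lemma center_fixed A e h : gcenter A e -> h \in A -> gconj h e = e.
Proof.
case=> _ he hA; apply/ffunP=> x; rewrite gconjE.
have := congr1 (fun u : galg => u (x * h)%g) (he _ (gsupp_delta hA)).
rewrite gmul_delta_r gmul_delta_l => E.
by rewrite conjgE -E mulgK.
Qed.

Lemma center_comm A e a : gcenter A e -> gsupp A a -> gmul e a = gmul a e.
Proof. by case=> _ he; apply: he. Qed.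

Lemma center_mul A e f : gcenter A e -> gcenter A f -> gcenter A (gmul e f).
Proof.
move=> he hf; split; first by apply: gsupp_mul; [case: he | case: hf].
move=> c hc.
by rewrite gmulA (center_comm hf hc) -gmulA (center_comm he hc) gmulA.
Qed.

Lemma block_absorb A e f :
  gblock A e -> gcenter A f -> gmul f f = f -> gmul e f != 0 -> gmul e f = e.
Proof.
case=> ce ee ne pe cf ff nz.
have ef_comm : gmul f e = gmul e f by apply: (center_comm cf); case: ce.
have [] := pe (gmul e f).
- exact: center_mul.
- by rewrite gmulA -(gmulA f e f) ef_comm (gmulA e f f) ff -gmulA ee.
- by rewrite gmulA ef_comm -gmulA ee.
- by rewrite -gmulA ee.
- by move=> E; rewrite E eqxx in nz.
- by [].
Qed.

Lemma block_orth A e e' : gblock A e -> gblock A e' -> gmul e e' != 0 -> e = e'.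
Proof.
move=> be be' nz.
have [ce ee _ _] := be; have [ce' ee' _ _] := be'.
have h1 := block_absorb be ce' ee' nz.
have comm : gmul e' e = gmul e e' by apply: (center_comm ce'); case: ce.
have h2 : gmul e' e = e' by apply: (block_absorb be' ce ee); rewrite comm.
by rewrite -h1 -comm h2.
Qed.

Lemma block_conj A e h : h \in ('N(A))%g -> gblock A e -> gblock A (gconj h e).
Proof.
move=> nA [[se ce] ee ne pe].
have nA' : (h^-1)%g \in ('N(A))%g by rewrite groupV.
have cen : gcenter A (gconj h e).
  split; first exact: gsupp_conj.
  move=> c sc; rewrite -(gconjVK h c) -!gconjM; congr (gconj h _).
  by apply: ce; apply: gsupp_conj.
split => //; first by rewrite -gconjM ee.
  by rewrite gconj_eq0.
move=> f cf ff fe ef.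
have cf' : gcenter A (gconj h^-1 f).
  case: cf => sf cf; split; first exact: gsupp_conj.
  move=> c sc; rewrite -(gconjK h c) -!gconjM; congr (gconj _ _).
  by apply: cf; apply: gsupp_conj.
have [] := pe (gconj h^-1 f) cf'.
- by rewrite -gconjM ff.
- by rewrite -(gconjK h e) -gconjM fe.
- by rewrite -(gconjK h e) -gconjM ef.
- by move/(congr1 (gconj h)); rewrite gconjVK gconj0; left.
- by move/(congr1 (gconj h)); rewrite gconjVK; right.
Qed.

End Basic.



Section Orbit.
Variables (F : fieldType) (p : nat) (charFp : p \in [pchar F]).

Lemma sum_orbit_fix (aT : finGroupType) (D : {group aT}) (rT : finType)
  (to : action D rT) (Q : {group aT}) (S : {set rT}) (phi : rT -> F) :
  (p.-group Q)%g -> Q \subset D -> [acts Q, on S | to] ->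
  (forall x q, x \in S -> q \in Q -> phi (to x q) = phi x) ->
  \sum_(x in S) phi x = \sum_(x in S | x \in ('Fix_to(Q))%g) phi x.
Proof.
move=> pQ sQD aQS phiQ.
rewrite (bigID (fun x => x \in ('Fix_to(Q))%g)) /= -[RHS]addr0; congr (_ + _).
pose S' := [set x in S | x \notin ('Fix_to(Q))%g].
rewrite (eq_bigl (mem S')); last by move=> x; rewrite !inE.
rewrite (partition_big_imset (orbit to Q)) /= big1 // => O /imsetP[y yS' ->].
have [yS nfy] : y \in S /\ y \notin ('Fix_to(Q))%g by move: yS'; rewrite inE => /andP.
have oS : orbit to Q y \subset S by rewrite acts_sub_orbit.
rewrite (eq_bigl (mem (orbit to Q y))); last first.
  move=> x /=; apply/andP/idP => [[_ /eqP <-]|xo]; first exact: orbit_refl.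
  have eo : orbit to Q x = orbit to Q y by apply/orbit_in_eqP.
  split; last by rewrite eo.
  rewrite inE (subsetP oS) //=; apply: contra nfy => /orbit1P fx.
  have : y \in orbit to Q x by rewrite eo orbit_refl.
  by rewrite fx inE => /eqP yx; apply/orbit1P; rewrite -eo fx yx.
rewrite (eq_bigr (fun _ => phi y)); last first.
  by move=> x /orbitP[q qQ <-]; apply: phiQ.
rewrite sumr_const -mulr_natr.
suff /eqP -> : (#|orbit to Q y|%:R : F) == 0 by rewrite mulr0.
rewrite -(dvdn_pcharf charFp).
have pn : p.-nat #|orbit to Q y|.
  by rewrite card_orbit_in //; apply: pnat_dvd (dvdn_indexg _ _) pQ.
have [k ek] := p_natP pn.
case: k ek => [|k] ek.
  by case/negP: nfy; apply/orbit1P; apply: card_orbit1; rewrite ek.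
by rewrite ek dvdn_exp.
Qed.

End Orbit.



Section Brauer.
Variables (F : fieldType) (p : nat) (charFp : p \in [pchar F]) (gT : finGroupType).
Local Notation galg := (galg F gT).
Implicit Types (a b e f : galg) (g h x y : gT).

Lemma centJfix (Q : {set gT}) x q : x \in ('C(Q))%g -> q \in Q -> (x ^ q)%g = x.
Proof. by move=> xC qQ; rewrite conjgE (centP xC q qQ) mulKg. Qed.

Lemma gBrB (Q : {set gT}) a b : gBr Q (a - b) = gBr Q a - gBr Q b.
Proof. by apply/ffunP=> x; rewrite !ffunE; case: ifP; rewrite ?subr0. Qed.

Lemma gBr0 (Q : {set gT}) : gBr Q (0 : galg) = 0.
Proof. by apply/ffunP=> x; rewrite !ffunE; case: ifP. Qed.

Lemma gBr_mul (Q : {group gT}) a b : (p.-group Q)%g -> gfixed Q a -> gfixed Q b ->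
  gBr Q (gmul a b) = gmul (gBr Q a) (gBr Q b).
Proof.
move=> pQ fa fb; apply/ffunP=> x; rewrite [LHS]ffunE.
case: (boolP (x \in ('C(Q))%g)) => xC; last first.
  rewrite gmulE big1 // => y _; rewrite !ffunE.
  case: (boolP (y \in ('C(Q))%g)) => yC; last by rewrite mul0r.
  case: (boolP ((y^-1 * x)%g \in ('C(Q))%g)) => yxC; last by rewrite mulr0.
  by case/negP: xC; rewrite -(mulKVg y x) groupM.
rewrite gmulE [LHS](eq_bigl (fun y => y \in [set: gT])); last by move=> y; rewrite inE.
rewrite (@sum_orbit_fix F p charFp _ _ _ ('J)%act Q [set: gT]
  (fun y => a y * b ((y^-1 * x)%g)) pQ (subsetT _)); last 2 first.
- by apply/actsP => q _ y; rewrite !inE.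
- move=> y q _ qQ /=; rewrite -{2}(fa q qQ) -{2}(fb q qQ) !gconjE.
  by rewrite conjMg conjVg (centJfix xC qQ).
rewrite afixJ gmulE big_mkcond [RHS]big_mkcond /=; apply: eq_bigr => y _.
rewrite !inE !ffunE /=.
case: (boolP (y \in ('C(Q))%g)) => yC; last by rewrite mul0r.
by rewrite groupM ?groupV.
Qed.

End Brauer.



Section Decomp.
Variables (F : fieldType) (gT : finGroupType).
Local Notation galg := (galg F gT).
Implicit Types (a b e f : galg) (g h x y : gT).

Definition Mx a : 'M[F]_#|gT| := \matrix_(i, j) a (enum_val i * (enum_val j)^-1)%g.

Lemma MxB a b : Mx (a - b) = Mx a - Mx b.
Proof. by apply/matrixP=> i j; rewrite !mxE !ffunE. Qed.

Lemma Mx0 : Mx 0 = 0.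
Proof. by apply/matrixP=> i j; rewrite !mxE !ffunE. Qed.

Lemma Mx_eq0 a : Mx a = 0 -> a = 0.
Proof.
move=> H; apply/ffunP=> x.
have := congr1 (fun M : 'M[F]_#|gT| => M (enum_rank x) (enum_rank 1%g)) H.
by rewrite !mxE !enum_rankK invg1 mulg1 => ->; rewrite ffunE.
Qed.

Lemma MxM a b : Mx (gmul a b) = Mx a *m Mx b.
Proof.
apply/matrixP=> i j; rewrite !mxE gmulE.
under [RHS]eq_bigr do rewrite !mxE.
rewrite -(big_enum_val (fun y => a (enum_val i * y^-1)%g * b (y * (enum_val j)^-1)%g)) /=.
have inj : injective (fun z => enum_val i * z^-1)%g by move=> u v /mulgI /invg_inj.
rewrite (reindex_inj inj) /=; apply: eq_big => [y|y _]; first by rewrite inE.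
by rewrite invMg invgK mulgA mulgKV.
Qed.

Lemma rank_lt e f : gmul e e = e -> gmul f f = f -> gmul f e = f -> gmul e f = f ->
  f != e -> (\rank (Mx f) < \rank (Mx e))%N.
Proof.
move=> ee ff fe ef nfe.
have sAE : (Mx f <= Mx e)%MS by rewrite -{1}fe MxM submxMl.
case: (mxrank_leqif_sup sAE) => le eqC; rewrite ltn_neqAle le eqC andbT.
apply/negP => sEA.
have Eg : Mx (e - f) = 0.
  have E1 : gmul e (e - f) = e - f by rewrite gmulBr ee ef.
  have E2 : gmul f (e - f) = 0 by rewrite gmulBr ff fe subrr.
  rewrite -E1 MxM -(mulmxKpV sEA) -mulmxA -MxM E2 Mx0 mulmx0.
  done.
move/Mx_eq0: Eg => /eqP; rewrite subr_eq0 => /eqP ef'.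
by rewrite ef' eqxx in nfe.
Qed.

Lemma prim_exists (Alg : galg -> Prop) (L : galg -> galg) :
  (forall a b, Alg a -> Alg b -> Alg (a - b)) ->
  (forall a b, L (a - b) = L a - L b) ->
  forall e, Alg e -> gmul e e = e -> L e != 0 -> exists i, prim_idem Alg i /\ L i != 0.
Proof.
move=> AB LB e.
have L0 : L 0 = 0 by have := LB 0 0; rewrite subrr => ->; rewrite subrr.
move: {2}(\rank (Mx e)).+1 (ltnSn (\rank (Mx e))) => n.
elim: n e => // n IH e rk Ae ee Le.
have ne : e != 0 by apply: contra Le => /eqP ->; rewrite L0.
case: (classic (forall f, Alg f -> gmul f f = f -> gmul f e = f -> gmul e f = f ->
        f = 0 \/ f = e)) => [prim | nprim].
  by exists e; split.
have [f] := not_all_ex_not _ _ nprim.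
move=> H0; have [Af H1] := imply_to_and _ _ H0; have [ff H2] := imply_to_and _ _ H1.
have [fe H3] := imply_to_and _ _ H2; have [ef nor] := imply_to_and _ _ H3.
have nf0 : f != 0 by apply/eqP => f0; apply: nor; left.
have nfe : f != e by apply/eqP => fe'; apply: nor; right.
pose g := e - f.
have Ag : Alg g by apply: AB.
have ge : gmul g e = g by rewrite gmulBl ee fe.
have eg : gmul e g = g by rewrite gmulBr ee ef.
have gg : gmul g g = g by rewrite gmulBr ge gmulBl ef ff subrr subr0.
have ngE : g != e by rewrite /g subr_eq -{1}[e]addr0 (inj_eq (addrI e)) eq_sym.
have rf := rank_lt ee ff fe ef nfe.
have rg := rank_lt ee gg ge eg ngE.
case: (boolP (L f == 0)) => Lf.
  apply: (IH g) => //; first by apply: leq_trans rg _; rewrite -ltnS.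
  by rewrite /g LB (eqP Lf) subr0.
by apply: (IH f) => //; apply: leq_trans rf _; rewrite -ltnS.
Qed.

End Decomp.



Section Main.
Variables (F : fieldType) (p : nat) (charFp : p \in [pchar F]) (gT : finGroupType).
Variables (N G H : {group gT}).
Hypotheses (nNG : (N <| G)%g) (nGH : (G <| H)%g) (nNH : (N <| H)%g).
Variables (b c bt : galg F gT).
Hypotheses (hb : gblock G b) (hbH : forall h, h \in H -> gconj h b = b)
  (hc : gblock N c) (hbt : gblock (inertia H c :&: G) bt) (hbtc : covers bt c)
  (hTr : b = gTr G (inertia H c :&: G) bt).

Lemma inertia_gs : group_set (inertia H c).
Proof.
apply/group_setP; split; first by rewrite inE group1 gconj1 eqxx.
move=> x y; rewrite !inE => /andP[xH /eqP xc] /andP[yH /eqP yc].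
by rewrite groupM // -gconjJ yc xc eqxx.
Qed.

Let IG : {group gT} := Group inertia_gs.
Let J : {group gT} := (IG :&: G)%G.

Lemma hTrJ : b = gTr G J bt.
Proof. exact: hTr. Qed.

Lemma hbtJ : gblock J bt.
Proof. exact: hbt. Qed.

Lemma memI h : (h \in IG) = (h \in H) && (gconj h c == c).
Proof. by rewrite /IG /= inE. Qed.

Lemma sIH : IG \subset H.
Proof. by apply/subsetP=> h; rewrite memI => /andP[]. Qed.

Lemma sJG : J \subset G.
Proof. exact: subsetIr. Qed.

Lemma sJI : J \subset IG.
Proof. exact: subsetIl. Qed.

Lemma sGH : G \subset H.
Proof. by case/andP: nGH. Qed.

Lemma c_center : gcenter N c.
Proof. by case: hc. Qed.

Lemma sNI : N \subset IG.
Proof.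
apply/subsetP=> n nN; rewrite memI (subsetP (normal_sub nNH)) //=.
by rewrite (center_fixed c_center nN).
Qed.

Lemma sNJ : N \subset J.
Proof. by rewrite subsetI sNI; case/andP: nNG. Qed.

Lemma cfixI j : j \in IG -> gconj j c = c.
Proof. by rewrite memI => /andP[_ /eqP]. Qed.

Lemma c_centerJ : gcenter J c.
Proof.
split; first by apply: (gsuppS sNJ); case: c_center.
move=> a sa; apply: (comm_fixed sa) => j jJ; apply: cfixI.
exact: (subsetP sJI).
Qed.

Lemma cc : gmul c c = c.
Proof. by case: hc. Qed.

Lemma bt_center : gcenter J bt.
Proof. by case: hbt. Qed.

Lemma bt_supp : gsupp J bt.
Proof. by case: bt_center. Qed.

Lemma btbt : gmul bt bt = bt.
Proof. by case: hbt. Qed.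

Lemma bt_neq0 : bt != 0.
Proof. by case: hbt. Qed.

Lemma btc : gmul bt c = bt.
Proof. have hbt2 : gblock J bt := hbt. exact: (block_absorb hbt2 c_centerJ cc hbtc). Qed.

Lemma cbt : gmul c bt = bt.
Proof. by rewrite (center_comm c_centerJ bt_supp) btc. Qed.

Lemma normN h : h \in H -> h \in ('N(N))%g.
Proof. by move=> hH; apply: (subsetP (normal_norm nNH)). Qed.

Lemma orth_c h : h \in H -> h \notin IG ->
  gmul c (gconj h c) = 0 /\ gmul (gconj h c) c = 0.
Proof.
move=> hH nI.
have bh := block_conj (normN hH) hc.
have ne : gconj h c != c by apply: contra nI => /eqP E; rewrite memI hH E eqxx.
split; apply/eqP; apply: contraNT ne => nz.
  by apply/eqP/esym; apply: block_orth hc bh nz.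
by apply/eqP; apply: block_orth bh hc nz.
Qed.

Lemma orth_bt h : h \in H -> h \notin IG ->
  gmul bt (gconj h bt) = 0 /\ gmul (gconj h bt) bt = 0.
Proof.
move=> hH nI; have [o1 o2] := orth_c hH nI.
have E1 : gconj h bt = gmul (gconj h c) (gconj h bt) by rewrite -gconjM cbt.
have E2 : gconj h bt = gmul (gconj h bt) (gconj h c) by rewrite -gconjM btc.
split.
  by rewrite E1 -{1}btc gmulA -(gmulA c) o1 gmul0l gmul0r.
by rewrite E2 -{2}cbt gmulA -(gmulA (gconj h c)) o2 gmul0l gmul0r.
Qed.

Lemma lcosets_split (T : galg F gT) :
  (forall g, g \in G -> g \notin J -> gmul (gconj g bt) T = 0) ->
  gmul b T = gmul bt T.
Proof.
move=> H0; rewrite hTrJ /gTr gmul_suml.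
have JL : (J : {set gT}) \in lcosets J G.
  by apply/lcosetsP; exists 1%g; rewrite ?group1 ?lcoset1.
rewrite (bigD1 (J : {set gT})) // repr_group gconj1 big1 => [|X /andP[XL XJ]]; first by rewrite Monoid.simpm.
case/lcosetsP: XL => x xG XE; rewrite XE in XJ *.
have rX : repr (x *: J)%g \in (x *: J)%g by apply: mem_repr (lcoset_refl J x).
case/lcosetP: rX => j jJ rE.
apply: H0; first by rewrite rE groupM // (subsetP sJG).
apply: contra XJ => rJ; rewrite lcoset_id //.
by rewrite -(mulgK j x) -rE groupM ?groupV.
Qed.

Lemma lcosets_split_r (T : galg F gT) :
  (forall g, g \in G -> g \notin J -> gmul T (gconj g bt) = 0) ->
  gmul T b = gmul T bt.
Proof.
move=> H0; rewrite hTrJ /gTr gmul_sumr.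
have JL : (J : {set gT}) \in lcosets J G.
  by apply/lcosetsP; exists 1%g; rewrite ?group1 ?lcoset1.
rewrite (bigD1 (J : {set gT})) // repr_group gconj1 big1 => [|X /andP[XL XJ]]; first by rewrite Monoid.simpm.
case/lcosetsP: XL => x xG XE; rewrite XE in XJ *.
have rX : repr (x *: J)%g \in (x *: J)%g by apply: mem_repr (lcoset_refl J x).
case/lcosetP: rX => j jJ rE.
apply: H0; first by rewrite rE groupM // (subsetP sJG).
apply: contra XJ => rJ; rewrite lcoset_id //.
by rewrite -(mulgK j x) -rE groupM ?groupV.
Qed.

Lemma notI g : g \in G -> g \notin J -> g \notin IG.
Proof. by move=> gG; rewrite inE gG andbT. Qed.

Lemma btb : gmul bt b = bt.
Proof.
rewrite lcosets_split_r ?btbt // => g gG gJ.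
by have [] := orth_bt (subsetP sGH _ gG) (notI gG gJ).
Qed.

Lemma bbt : gmul b bt = bt.
Proof.
rewrite lcosets_split ?btbt // => g gG gJ.
by have [] := orth_bt (subsetP sGH _ gG) (notI gG gJ).
Qed.

Lemma normJ_I h : h \in IG -> h \in ('N(J))%g.
Proof.
move=> hI; have : [set h] \subset ('N(IG :&: G))%g.
  apply: normsI; rewrite sub1set; first exact: (subsetP (normG IG)).
  exact: (subsetP (normal_norm nGH)) (subsetP sIH _ hI).
by rewrite sub1set.
Qed.

Lemma stabI h : h \in IG -> gconj h bt = bt.
Proof.
move=> hI; have hH := subsetP sIH _ hI.
have bh : gblock J (gconj h bt) := block_conj (normJ_I hI) hbtJ.
have hc' := cfixI hI.
have E2 : gmul c (gconj h bt) = gconj h bt by rewrite -{1}hc' -gconjM cbt.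
have E3 : gmul b (gconj h bt) = gconj h bt by rewrite -{1}(hbH hH) -gconjM bbt.
have E4 : gmul b (gconj h bt) = gmul bt (gconj h bt).
  apply: lcosets_split => g gG gJ.
  have [_ o2] := orth_c (subsetP sGH _ gG) (notI gG gJ).
  rewrite -E2 -{1}btc gconjM gmulA -(gmulA (gconj g c)) o2.
  by rewrite gmul0l gmul0r.
have : gmul bt (gconj h bt) != 0 by rewrite -E4 E3 gconj_eq0 bt_neq0.
by move=> /(block_orth hbtJ bh) E; rewrite -E.
Qed.

Lemma stab_sub h : h \in H -> gconj h bt = bt -> h \in IG.
Proof.
move=> hH E; apply/negPn/negP => nI; have [o1 _] := orth_bt hH nI.
by move: o1; rewrite E btbt => /eqP; rewrite (negbTE bt_neq0).
Qed.

Lemma repr_lcoset x : x \in G -> repr (x *: J)%g \in G.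
Proof.
move=> xG; have : repr (x *: J)%g \in (x *: J)%g by apply: mem_repr (lcoset_refl J x).
by case/lcosetP => j jJ ->; rewrite groupM // (subsetP sJG).
Qed.

Lemma HGI h : h \in H -> exists2 g, g \in G & (g^-1 * h)%g \in IG.
Proof.
move=> hH.
have nz : gmul (gconj h bt) b != 0 by rewrite -{1}(hbH hH) -gconjM btb gconj_eq0 bt_neq0.
move: nz; rewrite hTrJ /gTr gmul_sumr.
case: (boolP [exists X in lcosets J G, gmul (gconj h bt) (gconj (repr X) bt) != 0]).
  case/exists_inP => X XL nz _.
  case/lcosetsP: XL => x xG XE.
  have rX : repr X \in G by rewrite XE repr_lcoset.
  exists (repr X) => //.
  apply/negPn/negP => nI.
  have rH : ((repr X)^-1 * h)%g \in H by rewrite groupM ?groupV // (subsetP sGH).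
  have [_ o2] := orth_bt rH nI.
  by move: nz; rewrite -{1}(mulKVg (repr X) h) -gconjJ -gconjM o2 gconj0 eqxx.
move/exists_inPn => all0; rewrite big1 ?eqxx // => X XL; apply/eqP.
by have := all0 X XL; rewrite negbK.
Qed.

Lemma phiR x y : bt (x ^ (repr (IG :* y))^-1)%g = bt (x ^ y^-1)%g.
Proof.
have : repr (IG :* y)%g \in (IG :* y)%g := mem_repr_rcoset IG y.
case/rcosetP => i iI ->.
by rewrite invMg conjgM -gconjE stabI ?groupV.
Qed.

Lemma bsum x : b x = \sum_(Y in rcosets IG H) bt (x ^ (repr Y)^-1)%g.
Proof.
rewrite hTrJ /gTr sum_ffunE.
under eq_bigr do rewrite gconjE.
pose pi := fun X : {set gT} => (IG :* (repr X)^-1)%g.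
have inj : {in lcosets J G &, injective pi}.
  move=> X1 X2 /lcosetsP[x1 x1G ->] /lcosetsP[x2 x2G ->] E.
  have r1X : repr (x1 *: J)%g \in (x1 *: J)%g := mem_repr _ (lcoset_refl J x1).
  have r2X : repr (x2 *: J)%g \in (x2 *: J)%g := mem_repr _ (lcoset_refl J x2).
  rewrite -(lcoset_eqP r1X) -(lcoset_eqP r2X); apply/lcoset_eqP.
  rewrite mem_lcoset inE; apply/andP; split; last by rewrite groupM ?groupV ?repr_lcoset.
  have : ((repr (x1 *: J))^-1)%g \in (IG :* (repr (x2 *: J))^-1)%g.
    by rewrite -/(pi _) -E rcoset_refl.
  by rewrite mem_rcoset invgK -(invgK (_ * _)%g) groupV invMg invgK.
have imE : rcosets IG H = pi @: lcosets J G.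
  apply/setP => Y; apply/idP/idP.
    case/rcosetsP => h hH ->.
    have [g gG gI] := HGI (groupVr hH).
    apply/imsetP; exists (g *: J)%g; first by apply/lcosetsP; exists g.
    apply/rcoset_eqP; rewrite mem_rcoset invgK.
    have : repr (g *: J)%g \in (g *: J)%g by apply: mem_repr (lcoset_refl J g).
    case/lcosetP => j jJ ->; rewrite mulgA; apply: groupM; last exact: (subsetP sJI).
    by rewrite -(invgK (h * g)%g) groupV invMg.
  case/imsetP => X /lcosetsP[x0 x0G ->] ->.
  rewrite /pi mem_rcosets; apply: (subsetP (mulG_subr IG H)).
  by rewrite groupV (subsetP sGH) ?repr_lcoset.
rewrite imE (big_imset _ inj); apply: eq_bigr => X _.
by rewrite /pi phiR invgK.
Qed.

Lemma exists_nz (I : finType) (A : {pred I}) (f : I -> F) :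
  \sum_(i in A) f i != 0 -> exists2 i, i \in A & f i != 0.
Proof.
case: (boolP [exists i in A, f i != 0]) => [/exists_inP[i iA fi] _| /exists_inPn all0].
  by exists i.
by rewrite big1 ?eqxx // => i iA; apply/eqP; have := all0 i iA; rewrite negbK.
Qed.

Lemma maxcore (Q : {group gT}) : (p.-group Q)%g -> Q \subset H -> gBr Q b != 0 ->
  exists y, (Q :^ y)%g \subset IG /\ gBr (Q :^ y)%g bt != 0.
Proof.
move=> pQ sQH BrQ.
have [x xC bx] : exists2 x, x \in ('C(Q))%g & b x != 0.
  case: (boolP [exists x in ('C(Q))%g, b x != 0]) => [/exists_inP[x ? ?]| /exists_inPn all0].
    by exists x.
  case/negP: BrQ; apply/eqP/ffunP => x; rewrite !ffunE; case: ifP => // xC.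
  by have := all0 x xC; rewrite negbK => /eqP.
have aQS : [acts Q, on rcosets IG H | 'Rs] by apply: subset_trans sQH (actsRs_rcosets IG H).
move: bx; rewrite bsum (sum_orbit_fix charFp (to := 'Rs%act) pQ (subsetT Q) aQS); last first.
  move=> Y q /rcosetsP[y0 _ ->] qQ /=.
  rewrite rcosetE -rcosetM !phiR invMg conjgM (centJfix xC) //; exact: groupVr.
move/exists_nz => [Y /andP[YS YF] nz].
case/rcosetsP: YS => y yH YE; rewrite YE phiR in nz.
exists (y^-1)%g; split.
  apply/subsetP => z; rewrite mem_conjg invgK => zy.
  move/afixP: (YF) => YF'; have := YF' _ zy; rewrite YE /= rcosetE -rcosetM.
  have -> : (y * z ^ y = z * y)%g by rewrite conjgE mulKVg.
  by move=> E; have := rcoset_refl IG (z * y)%g; rewrite E mem_rcoset mulgK.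
apply/negP => /eqP B0; have := congr1 (fun u : galg F gT => u (x ^ y^-1)%g) B0.
by rewrite !ffunE centJ memJ_conjg xC => E; rewrite E eqxx in nz.
Qed.

Lemma btfbt f : gsupp G f -> gsupp J (gmul (gmul bt f) bt).
Proof.
move=> sf; rewrite (gdecomp f) gmul_sumr gmul_suml.
apply: gsupp_sum => g _; rewrite gmul_scr gmul_scl.
case: (boolP (g \in G)) => gG; last by rewrite (sf g gG) gsc0; apply: gsupp0.
apply: gsupp_sc.
case: (boolP (g \in J)) => gJ.
  apply: gsupp_mul; last exact: bt_supp.
  by apply: gsupp_mul; [exact: bt_supp | exact: gsupp_delta].
rewrite gmulA delta_comm -gmulA.
have [o1 _] := orth_bt (subsetP sGH _ gG) (notI gG gJ).
by rewrite o1 gmul0l; apply: gsupp0.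
Qed.

Lemma main_section : exists (P : {group gT}) (i : galg F gT),
    [/\ P \subset inertia H c,
        maxBr p H b P,
        maxBr p (inertia H c) bt P,
        prim_idem (fixalg (inertia H c :&: G) bt P) i &
        prim_idem (fixalg G b P) i /\ gBr P i != 0].
Proof.
pose Pr := fun Q : {group gT} => [&& (p.-group Q)%g, Q \subset IG & gBr Q bt != 0].
have Pr1 : Pr 1%G.
  rewrite /Pr pgroup1 sub1G /=.
  have -> : gBr 1%G bt = bt by apply/ffunP=> x; rewrite ffunE cent1T inE.
  exact: bt_neq0.
case: (@arg_maxnP _ 1%G Pr (fun Q : {group gT} => #|Q|) Pr1) => P PrP maxP.
case/and3P: PrP => pP sPI BrP.
have fixP_bt : gfixed P bt by move=> q qP; apply: stabI; exact: (subsetP sPI).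
have fixP_b : gfixed P b.
  by move=> q qP; apply: hbH; apply: (subsetP sIH); exact: (subsetP sPI).
have BrPb : gBr P b != 0.
  apply: contra BrP => /eqP B0.
  by have := gBr_mul charFp pP fixP_b fixP_bt; rewrite bbt B0 gmul0l => ->.
have [i [pi Bri]] : exists i, prim_idem (fixalg J bt P) i /\ gBr P i != 0.
  apply: (@prim_exists _ _ _ _ _ _ bt) => //.
  - move=> u v [su uu fu] [sv vv fv]; split; first exact: gsupp_sub.
      by rewrite gmulBl uu vv.
    by move=> q qP; rewrite gconjB fu ?fv.
  - exact: gBrB.
  - by split; [exact: bt_supp | exact: btbt | ].
  - exact: btbt.
exists P, i; split.
- exact: sPI.
- split => //; first exact: subset_trans sPI sIH.
  move=> Q pQ sQH BrQ sPQ.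
  have [y [sQy BrQy]] := maxcore pQ sQH BrQ.
  have : Pr (Q :^ y)%G by rewrite /Pr pgroupJ pQ sQy.
  move/maxP; rewrite /= cardJg => le.
  by apply/eqP; rewrite eq_sym eqEcard sPQ; exact: le.
- split => //.
  move=> Q pQ sQI BrQ sPQ.
  have : Pr Q by rewrite /Pr pQ sQI BrQ.
  move/maxP => le.
  by apply/eqP; rewrite eq_sym eqEcard sPQ; exact: le.
- exact: pi.
- split => //.
  case: pi => [[si ib fi] ii ni pri].
  have bti : gmul bt i = i by rewrite (center_comm bt_center si) ib.
  split => //.
    split; first exact: gsuppS sJG si.
      by rewrite -{1}ib gmulA btb ib.
    exact: fi.
  move=> f [sf fb ff] f2 fi' if'.
  apply: pri => //; split => //.
    have E : gmul (gmul i (gmul (gmul bt f) bt)) i = f.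
      by rewrite -!gmulA ib if' gmulA bti fi'.
    rewrite -E; apply: gsupp_mul => //; apply: gsupp_mul => //.
    exact: btfbt.
  by rewrite -{1}fi' gmulA ib fi'.
Qed.

End Main.



Theorem mainTheorem9 (F : closedFieldType) (p : nat) (charFp : p \in [pchar F])
  (gT : finGroupType) (N G H : {group gT})
  (nNG : (N <| G)%g) (nGH : (G <| H)%g) (nNH : (N <| H)%g)
  (b c bt : galg F gT) :
  gblock G b -> (forall h, h \in H -> gconj h b = b) ->
  gblock N c -> covers b c ->
  gblock (inertia H c :&: G) bt -> covers bt c ->
  b = gTr G (inertia H c :&: G) bt ->
  exists (P : {group gT}) (i : galg F gT),
    [/\ P \subset inertia H c,
        maxBr p H b P,
        maxBr p (inertia H c) bt P,
        prim_idem (fixalg (inertia H c :&: G) bt P) i &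
        prim_idem (fixalg G b P) i /\ gBr P i != 0].
Proof.
move=> hb hbH hc hcov hbt hbtc hTr.
exact: (main_section charFp nNG nGH nNH hbH hc hbt hbtc hTr).
Qed.
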